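(* (a) Let $X$ be a compact Hausdorff space and let $G$ be a subgroup of $\mathrm{Homeo}(X)$, carrying the topology $\sigma$ induced by the compact-open topology. Then the natural action $G\times X\to X$, $(g,x)\mapsto g(x)$, is topologically exact. (b) Let $(X,d)$ be a metric space and let $G$ be a subgroup of the isometry group $\mathrm{Is}(X,d)$, carrying the topology $\sigma$ of pointwise convergence. Then the natural action $G\times X\to X$ is topologically exact.
   Context: Let $\alpha: G\times X\to X$ be a continuous action of a Hausdorff topological group $(G,\sigma)$ on a Hausdorff topological space $(X,\tau)$. The action is called topologically exact ($t$-exact) if there is no group topology $\sigma'\subsetneq\sigma$ on $G$ (strictly coarser, not necessarily Hausdorff) such that $\alpha$ is continuous as a map $(G,\sigma')\times(X,\tau)\to(X,\tau)$. $\mathrm{Homeo}(X)$ denotes the group of all self-homeomorphisms of $X$. *)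

(* Defs.v *)
From Stdlib Require Import Reals List.
Open Scope R_scope.

Definition is_topology {T : Type} (O : (T -> Prop) -> Prop) : Prop :=
  O (fun _ => True) /\
  (forall U V, O U -> O V -> O (fun x => U x /\ V x)) /\
  (forall F : (T -> Prop) -> Prop, (forall U, F U -> O U) ->
     O (fun x => exists U, F U /\ U x)).

Definition continuous {A B : Type} (OA : (A -> Prop) -> Prop)
  (OB : (B -> Prop) -> Prop) (f : A -> B) : Prop :=
  forall V, OB V -> OA (fun a => V (f a)).

Definition prod_topology {A B : Type} (OA : (A -> Prop) -> Prop)
  (OB : (B -> Prop) -> Prop) : (A * B -> Prop) -> Prop :=
  fun W => forall p, W p -> exists U V, OA U /\ OB V /\ U (fst p) /\ V (snd p) /\
     (forall a b, U a -> V b -> W (a, b)).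

Definition hausdorff {T : Type} (O : (T -> Prop) -> Prop) : Prop :=
  forall x y : T, x <> y -> exists U V, O U /\ O V /\ U x /\ V y /\
     (forall z, U z -> V z -> False).

Definition compact_set {T : Type} (O : (T -> Prop) -> Prop) (K : T -> Prop) : Prop :=
  forall F : (T -> Prop) -> Prop, (forall U, F U -> O U) ->
    (forall x, K x -> exists U, F U /\ U x) ->
    exists l : list (T -> Prop), (forall U, In U l -> F U) /\
      (forall x, K x -> exists U, In U l /\ U x).

Definition compact_space {T : Type} (O : (T -> Prop) -> Prop) : Prop :=
  compact_set O (fun _ => True).

(* topology generated by a subbasis S: finite intersections of members of S form a basis *)
Definition generated_topology {T : Type} (S : (T -> Prop) -> Prop) : (T -> Prop) -> Prop :=
  fun W => forall x, W x -> exists l : list (T -> Prop),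
    (forall B, In B l -> S B) /\ (forall B, In B l -> B x) /\
    (forall y, (forall B, In B l -> B y) -> W y).

Record is_group {G : Type} (mul : G -> G -> G) (inv : G -> G) (e : G) : Prop := {
  grp_mulA : forall a b c, mul a (mul b c) = mul (mul a b) c;
  grp_mul1g : forall a, mul e a = a;
  grp_mulVg : forall a, mul (inv a) a = e }.

(* group topology (not necessarily Hausdorff) *)
Definition group_topology {G : Type} (mul : G -> G -> G) (inv : G -> G)
  (O : (G -> Prop) -> Prop) : Prop :=
  is_topology O /\
  continuous (prod_topology O O) O (fun p => mul (fst p) (snd p)) /\
  continuous O O inv.

Definition is_action {G X : Type} (mul : G -> G -> G) (e : G) (act : G -> X -> X) : Prop :=
  (forall x, act e x = x) /\ (forall g h x, act (mul g h) x = act g (act h x)).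

(* faithful action: G is (identified with) a subgroup of the self-maps of X *)
Definition faithful {G X : Type} (act : G -> X -> X) : Prop :=
  forall g h, (forall x, act g x = act h x) -> g = h.

(* topological exactness of a continuous action of a Hausdorff topological group
   (G, OG) on (X, OX): the standing assumptions (OG a Hausdorff group topology,
   action jointly continuous) together with: every group topology O' coarser than OG
   for which the action is still continuous equals OG. *)
Definition t_exact {G X : Type} (mul : G -> G -> G) (inv : G -> G)
  (OG : (G -> Prop) -> Prop) (OX : (X -> Prop) -> Prop) (act : G -> X -> X) : Prop :=
  group_topology mul inv OG /\ hausdorff OG /\
  continuous (prod_topology OG OX) OX (fun p => act (fst p) (snd p)) /\
  (forall O' : (G -> Prop) -> Prop, group_topology mul inv O' ->
     (forall U, O' U -> OG U) ->
     continuous (prod_topology O' OX) OX (fun p => act (fst p) (snd p)) ->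
     forall U, OG U -> O' U).

Definition compact_open_topology {G X : Type} (OX : (X -> Prop) -> Prop)
  (act : G -> X -> X) : (G -> Prop) -> Prop :=
  generated_topology (fun B => exists (K U : X -> Prop),
     compact_set OX K /\ OX U /\ B = (fun g => forall x, K x -> U (act g x))).

Definition pointwise_topology {G X : Type} (OX : (X -> Prop) -> Prop)
  (act : G -> X -> X) : (G -> Prop) -> Prop :=
  generated_topology (fun B => exists (x : X) (U : X -> Prop),
     OX U /\ B = (fun g => U (act g x))).

Record is_metric {X : Type} (d : X -> X -> R) : Prop := {
  met_eq0 : forall x y, d x y = 0 <-> x = y;
  met_sym : forall x y, d x y = d y x;
  met_tri : forall x y z, d x z <= d x y + d y z }.

Definition metric_topology {X : Type} (d : X -> X -> R) : (X -> Prop) -> Prop :=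
  fun U => forall x, U x -> exists eps, 0 < eps /\ forall y, d x y < eps -> U y.

(* Main.v *)
Require Import Defs.
From Stdlib Require Import Reals List.
From Stdlib Require Import Classical FunctionalExtensionality PropExtensionality Lra.
Open Scope R_scope.

Lemma O_ext {T} (O : (T->Prop)->Prop) (P Q : T -> Prop) :
  O P -> (forall x, P x <-> Q x) -> O Q.
Proof.
  intros HP H. assert (P = Q) as <-; [|exact HP].
  apply functional_extensionality; intro x; apply propositional_extensionality; apply H.
Qed.

Lemma open_local {T} (O : (T->Prop)->Prop) (W : T -> Prop) : is_topology O ->
  (forall a, W a -> exists N, O N /\ N a /\ forall b, N b -> W b) -> O W.
Proof.
  intros [_ [_ Hun]] H.
  apply O_ext with (P := fun x => exists U, (O U /\ forall b, U b -> W b) /\ U x).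
  - apply Hun. intros U [HU _]; exact HU.
  - intro x; split.
    + intros [U [[_ HUW] Ux]]; auto.
    + intro Wx. destruct (H x Wx) as [N [HN [Nx HNW]]]. exists N.
      split; [split; [exact HN|exact HNW]|exact Nx].
Qed.

Lemma open_empty {T} (O : (T->Prop)->Prop) : is_topology O -> O (fun _ => False).
Proof. intros Ht. apply open_local; auto. intros a []. Qed.

Lemma open_union2 {T} (O : (T->Prop)->Prop) U V : is_topology O -> O U -> O V ->
  O (fun x => U x \/ V x).
Proof.
  intros Ht HU HV. apply open_local; auto. intros a [Ua|Va].
  - exists U. split; [exact HU|split; [exact Ua|]]. intros; left; auto.
  - exists V. split; [exact HV|split; [exact Va|]]. intros; right; auto.
Qed.

Lemma inter_list {T A} (O : (T->Prop)->Prop) (l : list A) (a : T) (Q : A -> T -> Prop) :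
  is_topology O ->
  (forall B, In B l -> exists N, O N /\ N a /\ forall t, N t -> Q B t) ->
  exists N, O N /\ N a /\ forall B, In B l -> forall t, N t -> Q B t.
Proof.
  intros [Hall [Hint _]]. induction l as [|B l IH]; intros H.
  - exists (fun _ => True). split; [exact Hall|split; [exact I|]]. intros B [].
  - destruct (H B (or_introl eq_refl)) as [N1 [HN1 [N1a HQ1]]].
    destruct IH as [N2 [HN2 [N2a HQ2]]]. { intros B' HB'; apply H; right; auto. }
    exists (fun x => N1 x /\ N2 x). split; [apply Hint; auto|]. split; [auto|].
    intros B' HB' t [Nt1 Nt2]. destruct HB' as [<-|HB']; [apply HQ1; auto| eapply HQ2; eauto].
Qed.

Lemma rect_list {A B C} (OA : (A->Prop)->Prop) (OB : (B->Prop)->Prop) (l : list C) a b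
  (Q : C -> A -> B -> Prop) : is_topology OA -> is_topology OB ->
  (forall c, In c l -> exists U V, OA U /\ OB V /\ U a /\ V b /\ forall u v, U u -> V v -> Q c u v) ->
  exists U V, OA U /\ OB V /\ U a /\ V b /\ forall c, In c l -> forall u v, U u -> V v -> Q c u v.
Proof.
  intros [HallA [HintA _]] [HallB [HintB _]]. induction l as [|c l IH]; intros H.
  - exists (fun _ => True), (fun _ => True).
    split; [exact HallA|split; [exact HallB|split; [exact I|split; [exact I|]]]]. intros c [].
  - destruct (H c (or_introl eq_refl)) as [U1 [V1 [HU1 [HV1 [U1a [V1b HQ1]]]]]].
    destruct IH as [U2 [V2 [HU2 [HV2 [U2a [V2b HQ2]]]]]]. { intros c' Hc'; apply H; right; auto. }
    exists (fun x => U1 x /\ U2 x), (fun x => V1 x /\ V2 x).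
    split; [apply HintA; auto|]. split; [apply HintB; auto|]. split; [auto|]. split; [auto|].
    intros c' Hc' u v [Uu1 Uu2] [Vv1 Vv2].
    destruct Hc' as [<-|Hc']; [apply HQ1; auto| eapply HQ2; eauto].
Qed.

Lemma gen_top {T} (S : (T->Prop)->Prop) : is_topology (generated_topology S).
Proof.
  split; [|split].
  - intros x _. exists nil. split; [intros B []|split; [intros B []|]]. intros; exact I.
  - intros U V HU HV x [Ux Vx].
    destruct (HU x Ux) as [l1 [S1 [B1 W1]]]. destruct (HV x Vx) as [l2 [S2 [B2 W2]]].
    exists (l1 ++ l2). split; [|split].
    + intros B HB; apply in_app_or in HB; destruct HB as [HB|HB]; [apply S1|apply S2]; exact HB.
    + intros B HB; apply in_app_or in HB; destruct HB as [HB|HB]; [apply B1|apply B2]; exact HB.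
    + intros y Hy. split; [apply W1|apply W2]; intros B HB; apply Hy; apply in_or_app; auto.
  - intros F HF x [U [FU Ux]].
    destruct (HF U FU x Ux) as [l [S1 [B1 W1]]]. exists l.
    split; [exact S1|split; [exact B1|]].
    intros y Hy. exists U. split; [exact FU|apply W1; exact Hy].
Qed.

Lemma gen_sub {T} (S : (T->Prop)->Prop) B : S B -> generated_topology S B.
Proof.
  intros HB x Bx. exists (B :: nil). split; [|split].
  - intros B' [<-|[]]; auto.
  - intros B' [<-|[]]; auto.
  - intros y Hy. apply Hy; left; auto.
Qed.

Lemma gen_cont_local {A T} (OA : (A->Prop)->Prop) (S : (T->Prop)->Prop) (f : A -> T) :
  is_topology OA ->
  (forall B a, S B -> B (f a) -> exists N, OA N /\ N a /\ forall a', N a' -> B (f a')) ->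
  continuous OA (generated_topology S) f.
Proof.
  intros Ht H V HV. apply open_local; auto. intros a Va.
  destruct (HV (f a) Va) as [l [Sl [Bl Wl]]].
  destruct (inter_list OA l a (fun B t => B (f t)) Ht) as [N [HN [Na HNQ]]].
  { intros B HB. apply H; [apply Sl|apply Bl]; exact HB. }
  exists N. split; [auto|split; [auto|]]. intros b Nb. apply Wl. intros B HB. eapply HNQ; eauto.
Qed.

Lemma gen_cont_prod {A B T} (OA : (A->Prop)->Prop) (OB : (B->Prop)->Prop)
  (S : (T->Prop)->Prop) (f : A -> B -> T) :
  is_topology OA -> is_topology OB ->
  (forall W a b, S W -> W (f a b) -> exists U V, OA U /\ OB V /\ U a /\ V b /\
     forall u v, U u -> V v -> W (f u v)) ->
  continuous (prod_topology OA OB) (generated_topology S) (fun p => f (fst p) (snd p)).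
Proof.
  intros HtA HtB H V HV [a b] Vab. simpl in Vab.
  destruct (HV _ Vab) as [l [Sl [Bl Wl]]].
  destruct (rect_list OA OB l a b (fun W u v => W (f u v)) HtA HtB)
    as [U [V' [HU [HV' [Ua [Vb HQ]]]]]].
  { intros W HW. apply H; [apply Sl|apply Bl]; exact HW. }
  exists U, V'. split; [auto|split; [auto|split; [exact Ua|split; [exact Vb|]]]].
  intros u v Uu Vv. simpl. apply Wl. intros W HW. eapply HQ; eauto.
Qed.

Lemma gen_coarser {T} (S : (T->Prop)->Prop) (O' : (T->Prop)->Prop) :
  is_topology O' -> (forall B, S B -> O' B) -> forall W, generated_topology S W -> O' W.
Proof.
  intros Ht HS W HW. apply open_local; auto. intros a Wa.
  destruct (HW a Wa) as [l [Sl [Bl Wl]]].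
  destruct (inter_list O' l a (fun B t => B t) Ht) as [N [HN [Na HNQ]]].
  { intros B HB. exists B. split; [apply HS; apply Sl; exact HB|split; [apply Bl; exact HB|]]. intros t Bt; exact Bt. }
  exists N. split; [auto|split;[auto|]]. intros b Nb. apply Wl. intros B HB. eapply HNQ; eauto.
Qed.

Lemma filter_list {T} (F : T -> Prop) (l' : list T) :
  exists l, (forall V, In V l -> F V) /\ (forall V, In V l' -> F V -> In V l).
Proof.
  induction l' as [|V l' [l [H1 H2]]].
  - exists nil. split; [intros V []| intros V []].
  - destruct (classic (F V)) as [HF|HF].
    + exists (V :: l). split.
      * intros V' [<-|HV']; auto.
      * intros V' [<-|HV'] HFV'; [left; auto|right; auto].
    + exists l. split; auto. intros V' [<-|HV'] HFV'; [contradiction|auto].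
Qed.

Lemma closed_compact {T} (O : (T->Prop)->Prop) (U : T -> Prop) :
  compact_space O -> O U -> compact_set O (fun y => ~ U y).
Proof.
  intros Hc HU F HF Hcov.
  assert (Hop : forall V, (F V \/ V = U) -> O V).
  { intros V [HV| ->]; auto. }
  assert (Hcv : forall x, True -> exists V, (F V \/ V = U) /\ V x).
  { intros x _. destruct (classic (U x)) as [Ux|Ux].
    + exists U; split; [right; reflexivity|exact Ux].
    + destruct (Hcov x Ux) as [V [FV Vx]]. exists V; split; [left; exact FV|exact Vx]. }
  destruct (Hc _ Hop Hcv) as [l' [Hl' Hcov']].
  destruct (filter_list F l') as [l [H1 H2]]. exists l. split; auto.
  intros x Ux. destruct (Hcov' x I) as [V [InV Vx]].
  destruct (Hl' V InV) as [FV| ->]; [exists V; auto| contradiction].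
Qed.

Lemma sep_point {T} (O : (T->Prop)->Prop) (C : T -> Prop) (p : T) :
  is_topology O -> hausdorff O -> compact_set O C -> ~ C p ->
  exists W W', O W /\ O W' /\ (forall y, C y -> W y) /\ W' p /\ (forall z, W z -> W' z -> False).
Proof.
  intros Ht Hh Hc Cp. pose proof Ht as [Hall [Hint Hun]].
  set (F := fun U => O U /\ exists V, O V /\ V p /\ forall z, U z -> V z -> False).
  assert (HF : forall U, F U -> O U) by (intros U [HU _]; exact HU).
  assert (Hcov : forall y, C y -> exists U, F U /\ U y).
  { intros y Cy. assert (Hyp : y <> p) by (intros ->; contradiction).
    destruct (Hh y p Hyp) as [U [V [HU [HV [Uy [Vp Hd]]]]]].
    exists U. split; [split; [exact HU| exists V; split; [exact HV|split; [exact Vp|exact Hd]]]|exact Uy]. }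
  destruct (Hc F HF Hcov) as [l [Hl Hcl]].
  assert (Hind : forall l, (forall U, In U l -> F U) -> exists W W', O W /\ O W' /\
      (forall U, In U l -> forall y, U y -> W y) /\ W' p /\ (forall z, W z -> W' z -> False)).
  { clear l Hl Hcl. induction l as [|U l IH]; intros Hl.
    - exists (fun _ => False), (fun _ => True).
      split; [apply open_empty; auto|]. split; [exact Hall|]. split; [intros U []|].
      split; [exact I|]. intros z [].
    - destruct IH as [W [W' [HW [HW' [HWl [W'p Hd]]]]]]. { intros U' HU'; apply Hl; right; exact HU'. }
      destruct (Hl U (or_introl eq_refl)) as [HU [V [HV [Vp HdV]]]].
      exists (fun x => U x \/ W x), (fun x => V x /\ W' x).
      split; [apply open_union2; auto|]. split; [apply Hint; auto|].
      split; [intros U' HU' y Uy; destruct HU' as [<-|HU']; [left; exact Uy| right; eapply HWl; eauto]|].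
      split; [split; auto|].
      intros z [Uz|Wz] [Vz W'z]; [eapply HdV; eauto| eapply Hd; eauto]. }
  destruct (Hind l Hl) as [W [W' [HW [HW' [HWl [W'p Hd]]]]]].
  exists W, W'. split; [auto|split;[auto|split;[|split;auto]]].
  intros y Cy. destruct (Hcl y Cy) as [U [InU Uy]]. eapply HWl; eauto.
Qed.

Lemma sep_compact {T} (O : (T->Prop)->Prop) (K C : T -> Prop) (f : T -> T) :
  is_topology O -> hausdorff O -> compact_set O K -> compact_set O C -> continuous O O f ->
  (forall x, K x -> ~ C (f x)) ->
  exists W W', O W /\ O W' /\ (forall x, K x -> W (f x)) /\ (forall c, C c -> W' c) /\
    (forall z, W z -> W' z -> False).
Proof.
  intros Ht Hh HK HC Hf HKC. pose proof Ht as [Hall [Hint Hun]].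
  set (F := fun N => O N /\ exists U V, O U /\ O V /\ (forall c, C c -> U c) /\
     (forall z, N z -> V (f z)) /\ (forall z, U z -> V z -> False)).
  assert (HF : forall N, F N -> O N) by (intros N [HN _]; exact HN).
  assert (Hcov : forall x, K x -> exists N, F N /\ N x).
  { intros x Kx. destruct (sep_point O C (f x) Ht Hh HC (HKC x Kx))
      as [U [V [HU [HV [HCU [Vfx Hd]]]]]].
    exists (fun z => V (f z)). split; [split; [apply Hf; exact HV| exists U, V]|exact Vfx].
    split; [exact HU|split; [exact HV|split; [exact HCU|split; [auto|exact Hd]]]]. }
  destruct (HK F HF Hcov) as [l [Hl Hcl]].
  assert (Hind : forall l, (forall N, In N l -> F N) -> exists W W', O W /\ O W' /\
      (forall N, In N l -> forall z, N z -> W (f z)) /\ (forall c, C c -> W' c) /\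
      (forall z, W z -> W' z -> False)).
  { clear l Hl Hcl. induction l as [|N l IH]; intros Hl.
    - exists (fun _ => False), (fun _ => True).
      split; [apply open_empty; auto|]. split; [exact Hall|]. split; [intros U []|].
      split; [intros; exact I|]. intros z [].
    - destruct IH as [W [W' [HW [HW' [HWl [HCW' Hd]]]]]]. { intros U' HU'; apply Hl; right; exact HU'. }
      destruct (Hl N (or_introl eq_refl)) as [HN [U [V [HU [HV [HCU [HNV HdUV]]]]]]].
      exists (fun x => V x \/ W x), (fun x => U x /\ W' x).
      split; [apply open_union2; auto|]. split; [apply Hint; auto|].
      split; [intros N' HN' z Nz; destruct HN' as [<-|HN']; [left; auto| right; eapply HWl; eauto]|].
      split; [intros c Cc; split; auto|].
      intros z [Vz|Wz] [Uz W'z]; [eapply HdUV; eauto| eapply Hd; eauto]. }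
  destruct (Hind l Hl) as [W [W' [HW [HW' [HWl [HCW' Hd]]]]]].
  exists W, W'. split; [auto|split;[auto|split;[|split;auto]]].
  intros y Ky. destruct (Hcl y Ky) as [U [InU Uy]]. eapply HWl; eauto.
Qed.

Lemma compact_closed {T} (O : (T->Prop)->Prop) (K : T -> Prop) :
  is_topology O -> hausdorff O -> compact_set O K -> O (fun y => ~ K y).
Proof.
  intros Ht Hh HK. apply open_local; auto. intros y Ky.
  destruct (sep_point O K y Ht Hh HK Ky) as [W [W' [HW [HW' [HKW [W'y Hd]]]]]].
  exists W'. split; [exact HW'|split; [exact W'y|]]. intros b W'b Kb. exact (Hd b (HKW b Kb) W'b).
Qed.

Lemma single_compact {T} (O : (T->Prop)->Prop) (x : T) : compact_set O (fun y => y = x).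
Proof.
  intros F HF Hcov. destruct (Hcov x eq_refl) as [U [FU Ux]].
  exists (U :: nil). split.
  - intros V [<-|[]]; exact FU.
  - intros y ->. exists U. split; [left; reflexivity| exact Ux].
Qed.

Lemma mul_inv_r {G} (mul : G -> G -> G) inv e : is_group mul inv e -> forall a, mul a (inv a) = e.
Proof.
  intros [HA H1 HV] a.
  transitivity (mul (mul (inv (inv a)) (inv a)) (mul a (inv a))).
  { rewrite (HV (inv a)), (H1 (mul a (inv a))). reflexivity. }
  rewrite <- HA. rewrite (HA (inv a) a (inv a)). rewrite (HV a). rewrite (H1 (inv a)).
  exact (HV (inv a)).
Qed.

Definition co_sub {G X} (OX : (X->Prop)->Prop) (act : G -> X -> X) : (G -> Prop) -> Prop :=
  fun B => exists (K U : X -> Prop),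
     compact_set OX K /\ OX U /\ B = (fun g => forall x, K x -> U (act g x)).

Definition pt_sub {G X} (OX : (X->Prop)->Prop) (act : G -> X -> X) : (G -> Prop) -> Prop :=
  fun B => exists (x : X) (U : X -> Prop), OX U /\ B = (fun g => U (act g x)).

Lemma part_a (X G : Type) (OX : (X -> Prop) -> Prop)
     (mul : G -> G -> G) (inv : G -> G) (e : G) (act : G -> X -> X) :
     is_topology OX -> hausdorff OX -> compact_space OX ->
     is_group mul inv e -> is_action mul e act -> faithful act ->
     (forall g, continuous OX OX (act g)) ->
     t_exact mul inv (compact_open_topology OX act) OX act.
Proof.
  intros Ht Hh Hc Hg [Hae Ham] Hfa Hcont.
  assert (inv_l : forall g x, act (inv g) (act g x) = x).
  { intros g x. rewrite <- Ham, (grp_mulVg _ _ _ Hg), Hae. reflexivity. }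
  assert (inv_r : forall g x, act g (act (inv g) x) = x).
  { intros g x. rewrite <- Ham, (mul_inv_r _ _ _ Hg), Hae. reflexivity. }
  change (compact_open_topology OX act) with (generated_topology (co_sub OX act)).
  assert (HtG := gen_top (co_sub OX act)).
  assert (HsubS : forall K U, compact_set OX K -> OX U ->
     generated_topology (co_sub OX act) (fun g => forall x, K x -> U (act g x))).
  { intros K U HK HU. apply gen_sub. exists K, U. split; [exact HK|split; [exact HU|reflexivity]]. }
  split; [split; [exact HtG|split]|].
  - apply (gen_cont_prod _ _ _ (fun g h => mul g h) HtG HtG).
    intros W g0 h0 [K [U [HK [HU ->]]]] HW. cbv beta in HW.
    assert (HCc : compact_set OX (fun y => ~ U (act g0 y))).
    { apply (closed_compact OX (fun y => U (act g0 y))); [exact Hc| exact (Hcont g0 U HU)]. }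
    destruct (sep_compact OX K _ (act h0) Ht Hh HK HCc (Hcont h0)) as [W [W' [HW0 [HW' [HKW [HCW' Hd]]]]]].
    { intros x Kx Cx. apply Cx. rewrite <- Ham. apply HW; exact Kx. }
    exists (fun g => forall y, ~ W' y -> U (act g y)), (fun h => forall x, K x -> W (act h x)).
    split; [apply HsubS; [apply closed_compact; auto| exact HU]|].
    split; [apply HsubS; auto|].
    split; [| split; [exact HKW|]].
    + intros y Wy. apply NNPP. intro NU. exact (Wy (HCW' y NU)).
    + intros u v Hu Hv x Kx. cbv beta. rewrite Ham. apply Hu. intro W'v. exact (Hd _ (Hv x Kx) W'v).
  - apply (gen_cont_local _ _ inv HtG).
    intros B a [K [U [HK [HU ->]]]] Ha. cbv beta in Ha.
    exists (fun g => forall y, ~ U y -> ~ K (act g y)).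
    split; [apply (HsubS (fun y => ~ U y) (fun z => ~ K z)); [apply closed_compact; auto| apply compact_closed; auto]|].
    split.
    + intros y Uy Ky. apply Uy. pose proof (Ha _ Ky) as H. rewrite inv_l in H. exact H.
    + intros g Hg' x Kx. apply NNPP; intro NU. apply (Hg' _ NU). rewrite inv_r. exact Kx.
  - split.
    { intros g h Hne.
      destruct (not_all_ex_not _ _ (fun H => Hne (Hfa g h H))) as [x Hx].
      destruct (Hh _ _ Hx) as [U [V [HU [HV [Ug [Vh Hd]]]]]].
      exists (fun k => forall y, y = x -> U (act k y)), (fun k => forall y, y = x -> V (act k y)).
      split; [apply HsubS; [apply single_compact|exact HU]|].
      split; [apply HsubS; [apply single_compact|exact HV]|].
      split; [intros y ->; exact Ug|]. split; [intros y ->; exact Vh|].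
      intros k Hk1 Hk2. exact (Hd _ (Hk1 x eq_refl) (Hk2 x eq_refl)). }
    split.
    { intros V HV [g x] Hgx. simpl in Hgx.
      assert (HCc : compact_set OX (fun y => ~ V (act g y))).
      { apply (closed_compact OX (fun y => V (act g y))); [exact Hc| exact (Hcont g V HV)]. }
      destruct (sep_point OX _ x Ht Hh HCc (fun NV => NV Hgx)) as [W [W' [HW [HW' [HCW [W'x Hd]]]]]].
      exists (fun h => forall y, ~ W y -> V (act h y)), W'.
      split; [apply HsubS; [apply closed_compact; auto|exact HV]|].
      split; [exact HW'|]. split; [intros y Wy; apply NNPP; intro NV; exact (Wy (HCW y NV))|].
      split; [exact W'x|]. intros h y Hh' W'y. simpl. apply Hh'. intro Wy. exact (Hd y Wy W'y). }
    intros O' [HtO' _] _ Hact U0 HU0. apply (gen_coarser (co_sub OX act) O' HtO'); [|exact HU0].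
    intros B [K [U [HK [HU ->]]]]. apply open_local; auto.
    intros g Hg'.
    set (F := fun V => OX V /\ exists N, O' N /\ N g /\ forall h y, N h -> V y -> U (act h y)).
    assert (HF : forall V, F V -> OX V) by (intros V [HV _]; exact HV).
    assert (Hcov : forall x, K x -> exists V, F V /\ V x).
    { intros x Kx. destruct (Hact _ HU (g, x) (Hg' x Kx)) as [N [V [HN [HV [Ng [Vx HNV]]]]]].
      exists V. split; [split; [exact HV| exists N; split; [exact HN| split; [exact Ng| exact HNV]]]| exact Vx]. }
    destruct (HK F HF Hcov) as [l [Hl Hcl]].
    destruct (inter_list O' l g (fun V h => forall y, V y -> U (act h y)) HtO') as [N [HN [Ng HNl]]].
    { intros V HV. destruct (Hl V HV) as [_ [N [HN [Ng HNV]]]]. exists N.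
      split; [exact HN|split; [exact Ng|]]. intros h Nh y Vy. exact (HNV h y Nh Vy). }
    exists N. split; [exact HN| split; [exact Ng|]]. intros h Nh x Kx.
    destruct (Hcl x Kx) as [V [InV Vx]]. exact (HNl V InV h Nh x Vx).
Qed.

Lemma metric_top {X} (d : X -> X -> R) : is_metric d -> is_topology (metric_topology d).
Proof.
  intros Hm. split; [|split].
  - intros x _. exists 1. split; [lra| auto].
  - intros U V HU HV x [Ux Vx]. destruct (HU x Ux) as [e1 [He1 H1]].
    destruct (HV x Vx) as [e2 [He2 H2]].
    exists (Rmin e1 e2). split; [apply Rmin_glb_lt; auto|]. intros y Hy. split; [apply H1| apply H2].
    + eapply Rlt_le_trans; [exact Hy| apply Rmin_l].
    + eapply Rlt_le_trans; [exact Hy| apply Rmin_r].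
  - intros F HF x [U [FU Ux]]. destruct (HF U FU x Ux) as [e [He H]]. exists e. split; auto.
    intros y Hy. exists U. split; auto.
Qed.

Lemma ball_open {X} (d : X -> X -> R) c r : is_metric d -> metric_topology d (fun y => d c y < r).
Proof.
  intros Hm x Hx. exists (r - d c x). split; [lra|]. intros y Hy.
  pose proof (met_tri d Hm c x y). lra.
Qed.

Lemma d_refl {X} (d : X -> X -> R) : is_metric d -> forall x, d x x = 0.
Proof. intros Hm x. apply (met_eq0 d Hm). reflexivity. Qed.

Lemma d_nonneg {X} (d : X->X->R) : is_metric d -> forall x y, 0 <= d x y.
Proof.
  intros Hm x y. pose proof (met_tri d Hm x y x) as H.
  rewrite (met_sym d Hm y x), (d_refl d Hm) in H. lra.
Qed.

Lemma part_b (X G : Type) (d : X -> X -> R)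
     (mul : G -> G -> G) (inv : G -> G) (e : G) (act : G -> X -> X) :
     is_metric d ->
     is_group mul inv e -> is_action mul e act -> faithful act ->
     (forall g x y, d (act g x) (act g y) = d x y) ->
     t_exact mul inv (pointwise_topology (metric_topology d) act) (metric_topology d) act.
Proof.
  intros Hm Hg [Hae Ham] Hfa Hiso.
  assert (inv_r : forall g x, act g (act (inv g) x) = x).
  { intros g x. rewrite <- Ham, (mul_inv_r _ _ _ Hg), Hae. reflexivity. }
  pose proof (metric_top d Hm) as Ht.
  change (pointwise_topology (metric_topology d) act)
    with (generated_topology (pt_sub (metric_topology d) act)).
  assert (HtG := gen_top (pt_sub (metric_topology d) act)).
  assert (Hsub : forall x U, metric_topology d U ->
     generated_topology (pt_sub (metric_topology d) act) (fun g => U (act g x))).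
  { intros x U HU. apply gen_sub. exists x, U. split; [exact HU|reflexivity]. }
  assert (Hball : forall c r, metric_topology d (fun y => d c y < r)) by (intros; apply ball_open; auto).
  split; [split; [exact HtG|split]|].
  - apply (gen_cont_prod _ _ _ (fun g h => mul g h) HtG HtG).
    intros W g0 h0 [x [U [HU ->]]] HW. cbv beta in HW. rewrite Ham in HW.
    destruct (HU _ HW) as [eps [Heps Hb]].
    exists (fun g => d (act g0 (act h0 x)) (act g (act h0 x)) < eps/2),
           (fun h => d (act h0 x) (act h x) < eps/2).
    split; [exact (Hsub (act h0 x) (fun y => d (act g0 (act h0 x)) y < eps/2) (Hball _ _))|].
    split; [exact (Hsub x (fun y => d (act h0 x) y < eps/2) (Hball _ _))|].
    split; [rewrite (d_refl d Hm); lra|].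
    split; [rewrite (d_refl d Hm); lra|].
    intros u v Hu Hv. cbv beta. rewrite Ham. apply Hb.
    pose proof (met_tri d Hm (act g0 (act h0 x)) (act u (act h0 x)) (act u (act v x))) as H.
    rewrite (Hiso u) in H. lra.
  - apply (gen_cont_local _ _ inv HtG).
    intros B a [x [U [HU ->]]] Ha. cbv beta in Ha.
    destruct (HU _ Ha) as [eps [Heps Hb]].
    exists (fun g => d x (act g (act (inv a) x)) < eps).
    split; [exact (Hsub (act (inv a) x) (fun y => d x y < eps) (Hball _ _))|].
    split; [rewrite inv_r, (d_refl d Hm); lra|].
    intros g Hgx. apply Hb. rewrite <- (Hiso g). rewrite inv_r. rewrite (met_sym d Hm). exact Hgx.
  - split.
    { intros g h Hne.
      destruct (not_all_ex_not _ _ (fun H => Hne (Hfa g h H))) as [x Hx].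
      assert (Hr : 0 < d (act g x) (act h x)).
      { assert (0 <= d (act g x) (act h x)) by apply (d_nonneg d Hm).
        assert (d (act g x) (act h x) <> 0) by (intro H0; apply Hx; apply (met_eq0 d Hm); exact H0).
        lra. }
      exists (fun k => d (act g x) (act k x) < d (act g x) (act h x) / 2),
             (fun k => d (act h x) (act k x) < d (act g x) (act h x) / 2).
      split; [exact (Hsub x (fun y => d (act g x) y < d (act g x) (act h x) / 2) (Hball _ _))|].
      split; [exact (Hsub x (fun y => d (act h x) y < d (act g x) (act h x) / 2) (Hball _ _))|].
      split; [rewrite (d_refl d Hm); lra|]. split; [rewrite (d_refl d Hm); lra|].
      intros k H1 H2. pose proof (met_tri d Hm (act g x) (act k x) (act h x)) as H.
      rewrite (met_sym d Hm (act k x) (act h x)) in H. lra. }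
    split.
    { intros V HV [g x] Hgx. simpl in Hgx.
      destruct (HV _ Hgx) as [eps [Heps Hb]].
      exists (fun h => d (act g x) (act h x) < eps/2), (fun y => d x y < eps/2).
      split; [exact (Hsub x (fun y => d (act g x) y < eps/2) (Hball _ _))|].
      split; [apply Hball|]. split; [simpl; rewrite (d_refl d Hm); lra|].
      split; [simpl; rewrite (d_refl d Hm); lra|].
      intros h y Hh Hy. simpl. apply Hb.
      pose proof (met_tri d Hm (act g x) (act h x) (act h y)) as H. rewrite (Hiso h) in H. lra. }
    intros O' [HtO' _] _ Hact U0 HU0. apply (gen_coarser (pt_sub (metric_topology d) act) O' HtO'); [|exact HU0].
    intros B [x [W [HW ->]]]. apply open_local; auto.
    intros g Hg'. destruct (Hact _ HW (g, x) Hg') as [N [V [HN [HV [Ng [Vx HNV]]]]]].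
    exists N. split; [exact HN|split; [exact Ng|]]. intros h Nh. exact (HNV h x Nh Vx).
Qed.

Theorem lemma2p3 :
  (* (a) subgroups of Homeo(X), X compact Hausdorff, compact-open topology *)
  (forall (X G : Type) (OX : (X -> Prop) -> Prop)
     (mul : G -> G -> G) (inv : G -> G) (e : G) (act : G -> X -> X),
     is_topology OX -> hausdorff OX -> compact_space OX ->
     is_group mul inv e -> is_action mul e act -> faithful act ->
     (forall g, continuous OX OX (act g)) ->
     t_exact mul inv (compact_open_topology OX act) OX act)
  /\
  (* (b) subgroups of Is(X,d), topology of pointwise convergence *)
  (forall (X G : Type) (d : X -> X -> R)
     (mul : G -> G -> G) (inv : G -> G) (e : G) (act : G -> X -> X),
     is_metric d ->
     is_group mul inv e -> is_action mul e act -> faithful act ->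
     (forall g x y, d (act g x) (act g y) = d x y) ->
     t_exact mul inv (pointwise_topology (metric_topology d) act) (metric_topology d) act).
Proof.
  split; [exact part_a| exact part_b].
Qed.
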